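(* Let $V$ be a finite-dimensional real vector space and $F\in\Lambda^4V^*$ a 4-form such that for all $X,Y\in V$: $\iota_XF\wedge F=0$ and $\iota_XF\wedge\iota_YF=0$. Then $\iota_Z\iota_Y\iota_XF\wedge F=0$ for all $X,Y,Z\in V$, and consequently $F$ is decomposable, i.e. $F=\theta_1\wedge\theta_2\wedge\theta_3\wedge\theta_4$ for some $\theta_i\in V^*$.
   Context: $\iota_X$ denotes interior multiplication (contraction) by the vector $X$. A $p$-form is decomposable if it is a wedge product of $p$ one-forms. *)

(* Defs.v *)
(* Exterior algebra of (R^n)^* in coordinates:
   a (mixed-degree) form is its coefficient family on the standard basis
   e^S = e^{s_1} /\ ... /\ e^{s_k}  (s_1 < ... < s_k, S = {s_1,...,s_k}). *)
From HB Require Import structures.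
From mathcomp Require Import all_boot all_order all_algebra.
From mathcomp Require Import reals.
Set Implicit Arguments. Unset Strict Implicit. Unset Printing Implicit Defensive.
Import Order.TTheory GRing.Theory Num.Theory.
Local Open Scope ring_scope.

Definition extform (R : realType) (n : nat) := {ffun {set 'I_n} -> R}.

Definition is_pform (R : realType) (n p : nat) (a : extform R n) : Prop :=
  forall S : {set 'I_n}, #|S| != p -> a S = 0.

(* number of inversions of the concatenation of increasing lists A, B *)
Definition ninv (n : nat) (A B : {set 'I_n}) : nat :=
  #|[set p : 'I_n * 'I_n | (p.1 \in A) && (p.2 \in B) && (p.2 < p.1)%N]|.

(* wedge product: e^A /\ e^B = (-1)^{ninv A B} e^{A u B} if disjoint, else 0 *)
Definition wedge (R : realType) (n : nat) (a b : extform R n) : extform R n :=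
  [ffun S : {set 'I_n} =>
     \sum_(A : {set 'I_n} | A \subset S)
        (-1) ^+ ninv A (S :\: A) * a A * b (S :\: A)].

(* interior multiplication by the vector X in R^n:
   iota_{e_i} e^{S u {i}} = (-1)^{#{j in S | j < i}} e^S for i \notin S *)
Definition interior (R : realType) (n : nat) (X : 'I_n -> R) (a : extform R n)
  : extform R n :=
  [ffun S : {set 'I_n} =>
     \sum_(i : 'I_n | i \notin S)
        X i * (-1) ^+ #|[set j in S | (j < i)%N]| * a (i |: S)].

(* the one-form with coordinates t, i.e. sum_i t_i e^i *)
Definition oneform (R : realType) (n : nat) (t : 'I_n -> R) : extform R n :=
  [ffun S : {set 'I_n} => \sum_(i : 'I_n | S == [set i]) t i].

(* Main.v *)
Require Import Defs.
From HB Require Import structures.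
From mathcomp Require Import all_boot all_order all_algebra.
From mathcomp Require Import reals ring zify lra.
Import Order.TTheory GRing.Theory Num.Theory.
Local Open Scope ring_scope.

Definition cnt {n : nat} (S : {set 'I_n}) (i : 'I_n) : nat :=
  #|[set j in S | (j < i)%N]|.

Lemma cnt_sum {n} (S : {set 'I_n}) i : cnt S i = (\sum_(j in S) (j < i)%N)%N.
Proof.
rewrite /cnt -sum1_card big_mkcond [RHS]big_mkcond /=.
by apply: eq_bigr => j _; rewrite !inE; case: (j \in S); case: (j < i)%N.
Qed.

Lemma ninv_sum {n} (A B : {set 'I_n}) :
  ninv A B = (\sum_(x in A) \sum_(y in B) (y < x)%N)%N.
Proof.
rewrite /ninv -sum1_card.
rewrite [RHS](eq_bigr (fun x : 'I_n => \sum_(y in B | (y < x)%N) 1)%N); last first.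
  by move=> x _; rewrite big_mkcond [RHS]big_mkcond /=; apply: eq_bigr => y _; case: (y \in B).
by rewrite pair_big_dep /=; apply: eq_bigl => p; rewrite !inE andbA.
Qed.

Definition cntg {n : nat} (S : {set 'I_n}) (i : 'I_n) : nat :=
  #|[set j in S | (i < j)%N]|.

Lemma cntg_sum {n} (S : {set 'I_n}) i : cntg S i = (\sum_(j in S) (i < j)%N)%N.
Proof.
rewrite /cntg -sum1_card big_mkcond [RHS]big_mkcond /=.
by apply: eq_bigr => j _; rewrite !inE; case: (j \in S); case: (i < j)%N.
Qed.

Lemma cntU1 {n} (S : {set 'I_n}) i j : i \notin S -> cnt (i |: S) j = ((i < j)%N + cnt S j)%N.
Proof. by move=> iS; rewrite !cnt_sum big_setU1. Qed.

Lemma ninvU1l {n} (A B : {set 'I_n}) i : i \notin A ->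
  ninv (i |: A) B = (cnt B i + ninv A B)%N.
Proof. by move=> iA; rewrite !ninv_sum big_setU1 // cnt_sum. Qed.

Lemma ninvU1r {n} (A B : {set 'I_n}) i : i \notin B ->
  ninv A (i |: B) = (cntg A i + ninv A B)%N.
Proof.
move=> iB; rewrite !ninv_sum cntg_sum -big_split /=.
by apply: eq_bigr => x _; rewrite big_setU1.
Qed.

Lemma ninv_sym {n} (A B : {set 'I_n}) : [disjoint A & B] ->
  (ninv A B + ninv B A = #|A| * #|B|)%N.
Proof.
move=> dAB; rewrite !ninv_sum [X in (_ + X)%N]exchange_big -big_split /=.
rewrite -sum1_card big_distrl /=; apply: eq_bigr => x xA.
rewrite -big_split /= mul1n -sum1_card; apply: eq_bigr => y yB.
have xy : x != y.
  by apply: contraTneq yB => <-; rewrite (disjointFr dAB xA).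
by case: ltngtP => //= h; move: xy; rewrite (val_inj h) eqxx.
Qed.

Lemma cntD {n} (A S : {set 'I_n}) i : A \subset S ->
  cnt S i = (cnt A i + cnt (S :\: A) i)%N.
Proof.
move=> AS; rewrite !cnt_sum (big_setID A) /=.
by rewrite (setIidPr AS).
Qed.

Lemma cnt_cntg {n} (A : {set 'I_n}) i : i \notin A -> (cnt A i + cntg A i = #|A|)%N.
Proof.
move=> iA; rewrite cnt_sum cntg_sum -big_split -sum1_card /=.
apply: eq_bigr => x xA.
have xi : x != i by apply: contraTneq xA => ->.
by case: ltngtP => //= h; move: xi; rewrite (val_inj h) eqxx.
Qed.

Lemma zeroE {R : realType} {n} (S : {set 'I_n}) : (0 : extform R n) S = 0.
Proof. by rewrite ffunE. Qed.
Lemma zeroP {R : realType} {n} (w : extform R n) : (forall S, w S = 0) -> w = 0.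
Proof. by move=> h; apply/ffunP => S; rewrite h zeroE. Qed.

Lemma oppE {R : realType} {n} (w : extform R n) (S : {set 'I_n}) : (- w) S = - w S.
Proof. by rewrite ffunE. Qed.

Definition ib {R : realType} {n} (i : 'I_n) (w : extform R n) : extform R n :=
  [ffun S : {set 'I_n} => if i \in S then 0 else (-1) ^+ cnt S i * w (i |: S)].

Lemma ibE {R : realType} {n} (i : 'I_n) (w : extform R n) (S : {set 'I_n}) :
  ib i w S = if i \in S then 0 else (-1) ^+ cnt S i * w (i |: S).
Proof. by rewrite ffunE. Qed.

Lemma interiorE {R : realType} {n} (X : 'I_n -> R) (w : extform R n) S :
  interior X w S = \sum_i X i * ib i w S.
Proof.
rewrite ffunE big_mkcond /=; apply: eq_bigr => i _; rewrite ibE.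
by case: (i \in S) => /=; rewrite ?mulr0 // mulrA.
Qed.

Lemma interior_delta {R : realType} {n} (i : 'I_n) (w : extform R n) :
  interior (fun j => (j == i)%:R) w = ib i w.
Proof.
apply/ffunP => S; rewrite interiorE (bigD1 i) //= eqxx mul1r big1 ?addr0 //.
by move=> j /negbTE ->; rewrite mul0r.
Qed.

Lemma ib_pform {R : realType} {n} p i (w : extform R n) :
  is_pform p w -> is_pform p.-1 (ib i w).
Proof.
move=> hw S hS; rewrite ibE; case: ifP => // iS.
rewrite hw ?mulr0 // cardsU1 iS /= add1n; by case: p hw hS => [|p] // _; rewrite eqSS.
Qed.

Lemma interior_pform {R : realType} {n} p X (w : extform R n) :
  is_pform p w -> is_pform p.-1 (interior X w).
Proof.
move=> hw S hS; rewrite interiorE big1 // => i _.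
by rewrite (@ib_pform _ _ p i w hw S hS) mulr0.
Qed.

Lemma ib_anti {R : realType} {n} (i j : 'I_n) (w : extform R n) :
  ib i (ib j w) = - ib j (ib i w).
Proof.
apply/ffunP => S; rewrite oppE !ibE !in_setU1.
have [->|ij] := eqVneq i j.
  by rewrite /=; case: (j \in S); rewrite ?mulr0 oppr0.
rewrite /=.
case iS: (i \in S); case jS: (j \in S) => /=; rewrite ?mulr0 ?oppr0 //.
rewrite !cntU1 ?iS ?jS // setUCA.
case: (ltngtP i j) => h.
- rewrite !exprD expr1 expr0. ring.
- rewrite !exprD expr1 expr0. ring.
- by move: ij; rewrite (val_inj h) eqxx.
Qed.

Lemma wedgeE {R : realType} {n} (a b : extform R n) (S : {set 'I_n}) :
  wedge a b S = \sum_(A : {set 'I_n} | A \subset S) (-1) ^+ ninv A (S :\: A) * a A * b (S :\: A).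
Proof. by rewrite ffunE. Qed.

Lemma sgE {R : realType} (k : nat) : (-1) ^+ k = (if odd k then -1 else 1 : R).
Proof. by rewrite -signr_odd; case: (odd k); rewrite ?expr1 ?expr0. Qed.

Lemma sum_in {R : realType} {n} (S : {set 'I_n}) i (f : {set 'I_n} -> R) : i \in S ->
  \sum_(A : {set 'I_n} | (A \subset S) && (i \in A)) f A =
  \sum_(A : {set 'I_n} | (A \subset S) && (i \notin A)) f (i |: A).
Proof.
move=> iS.
rewrite (reindex_onto (fun A => i |: A) (fun A => A :\ i)); last first.
  by move=> A /andP [_ iA]; rewrite setD1K.
apply: eq_bigl => A; rewrite setU11 andbT subUset sub1set iS /=.
case iA: (i \in A) => /=.
  by rewrite andbF; apply/negbTE; apply/andP => [[_ /eqP e]]; move: iA; rewrite -e !inE eqxx.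
by rewrite andbT (setU1K (negbT iA)) eqxx andbT.
Qed.

Lemma subU1_notin {n} (S A : {set 'I_n}) i : i \notin S ->
  (A \subset i |: S) && (i \notin A) = (A \subset S).
Proof.
move=> iS; case iA: (i \in A) => /=.
  rewrite andbF; apply/esym/negbTE/negP => /subsetP h; by rewrite (h _ iA) in iS.
rewrite andbT; apply/subsetP/subsetP => h x xA; move: (h x xA); rewrite ?in_setU1.
  by case/orP => // /eqP e; rewrite e iA in xA.
by move->; rewrite orbT.
Qed.

Lemma sum_U1 {R : realType} {n} (S : {set 'I_n}) i (f : {set 'I_n} -> R) : i \notin S ->
  \sum_(A : {set 'I_n} | A \subset i |: S) f A =
  \sum_(A : {set 'I_n} | A \subset S) f (i |: A) + \sum_(A : {set 'I_n} | A \subset S) f A.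
Proof.
move=> iS; rewrite (bigID (fun A : {set 'I_n} => i \in A)) /= sum_in ?setU11 //.
by congr (_ + _); apply: eq_bigl => A; rewrite subU1_notin.
Qed.

Lemma notin_sub {n} (S A : {set 'I_n}) i : i \notin S -> A \subset S -> i \notin A.
Proof. by move=> iS AS; apply: contra iS; apply: (subsetP AS). Qed.

Lemma leibniz_ib {R : realType} {n} p i (a b : extform R n) (S : {set 'I_n}) :
  is_pform p a ->
  ib i (wedge a b) S = wedge (ib i a) b S + (-1) ^+ p * wedge a (ib i b) S.
Proof.
move=> ha; rewrite ibE !wedgeE.
case iS: (i \in S).
- rewrite (bigID (fun A : {set 'I_n} => i \in A)) /= big1; last first.
    by move=> A /andP [_ iA]; rewrite ibE iA mulr0 mul0r.
  rewrite add0r [X in _ * X](bigID (fun A : {set 'I_n} => i \in A)) /= [X in _ * (_ + X)]big1; last first.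
    by move=> A /andP [AS iA]; rewrite ibE in_setD iA iS /= mulr0.
  rewrite addr0 sum_in // mulr_sumr -big_split /= big1 // => A /andP [AS iA].
  set B' := S :\: (i |: A).
  have iB' : i \notin B' by rewrite !inE eqxx.
  have hSA : S :\: A = i |: B'.
    apply/setP => x; rewrite !inE; case: eqP => [->|] //=; by rewrite iA iS.
  rewrite !ibE (negbTE iA) (negbTE iB') hSA ninvU1r // ninvU1l //.
  have [->|nz] := eqVneq (a (i |: A)) 0; first by rewrite !(mulr0, mul0r) addr0.
  have hp : p = (1 + (cnt A i + cntg A i))%N.
    apply/eqP; apply: contraR nz => hc; apply/eqP/ha.
    by rewrite cardsU1 iA /= add1n -(@cnt_cntg _ A i iA) eq_sym.
  rewrite hp; move: (cnt A i) (cntg A i) (ninv A B') (cnt B' i) => x1 x2 x3 x4.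
  rewrite !exprD !sgE /=; case: (odd x1); case: (odd x2); case: (odd x3); case: (odd x4);
    rewrite /=; ring.
- rewrite sum_U1 ?iS // mulrDr; congr (_ + _); rewrite !mulr_sumr; apply: eq_bigr => A AS.
  + have iA : i \notin A by apply: notin_sub AS; rewrite iS.
    have hS : (i |: S) :\: (i |: A) = S :\: A.
      apply/setP => x; rewrite !inE; case: eqP => [->|] //=; by rewrite iS andbF.
    rewrite ibE (negbTE iA) hS ninvU1l //.
    rewrite (@cntD _ _ _ i AS).
    move: (cnt A i) (cnt (S :\: A) i) (ninv A (S :\: A)) => x1 x2 x3.
    rewrite !exprD !sgE /=; case: (odd x1); case: (odd x2); case: (odd x3);
      rewrite /=; ring.
  + have iA : i \notin A by apply: notin_sub AS; rewrite iS.
    have iSA : i \notin S :\: A by rewrite !inE iS andbF.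
    have hS : (i |: S) :\: A = i |: (S :\: A).
      apply/setP => x; rewrite !inE; case: eqP => [->|] //=; by rewrite (negbTE iA).
    rewrite ibE (negbTE iSA) hS ninvU1r // (@cntD _ _ _ i AS).
    have [->|nz] := eqVneq (a A) 0; first by rewrite !(mulr0, mul0r).
    have hp : p = (cnt A i + cntg A i)%N.
      apply/eqP; apply: contraR nz => hc; apply/eqP/ha.
      by rewrite -(@cnt_cntg _ A i iA) eq_sym.
    rewrite hp; move: (cnt A i) (cntg A i) (ninv A (S :\: A)) (cnt (S :\: A) i) => x1 x2 x3 x4.
    rewrite !exprD !sgE /=; case: (odd x1); case: (odd x2); case: (odd x3); case: (odd x4);
      rewrite /=; ring.
Qed.

Lemma ib_interior {R : realType} {n} i (X : 'I_n -> R) (w : extform R n) (S : {set 'I_n}) :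
  ib i (interior X w) S = \sum_j X j * ib i (ib j w) S.
Proof.
rewrite ibE; case: ifPn => iS.
  by rewrite big1 // => j _; rewrite (ibE i) iS mulr0.
rewrite interiorE mulr_sumr; apply: eq_bigr => j _; rewrite (ibE i) (negbTE iS); ring.
Qed.

Lemma interior_anti {R : realType} {n} (X Y : 'I_n -> R) (w : extform R n) :
  interior Y (interior X w) = - interior X (interior Y w).
Proof.
apply/ffunP => S; rewrite oppE !interiorE.
rewrite (eq_bigr (fun i => \sum_j Y i * X j * ib i (ib j w) S)); last first.
  by move=> i _; rewrite ib_interior mulr_sumr; apply: eq_bigr => j _; ring.
rewrite [X in - X](eq_bigr (fun j => \sum_i X j * Y i * ib j (ib i w) S)); last first.
  by move=> j _; rewrite ib_interior mulr_sumr; apply: eq_bigr => i _; ring.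
rewrite [X in - X]exchange_big -sumrN; apply: eq_bigr => i _.
rewrite -sumrN; apply: eq_bigr => j _; rewrite ib_anti oppE; ring.
Qed.

Lemma wedge_interior_l {R : realType} {n} (X : 'I_n -> R) (a b : extform R n) S :
  wedge (interior X a) b S = \sum_i X i * wedge (ib i a) b S.
Proof.
rewrite wedgeE.
rewrite (eq_bigr (fun A => \sum_i X i * ((-1) ^+ ninv A (S :\: A) * ib i a A * b (S :\: A)))); last first.
  by move=> A _; rewrite interiorE mulr_sumr mulr_suml; apply: eq_bigr => i _; ring.
rewrite exchange_big; apply: eq_bigr => i _; rewrite wedgeE mulr_sumr.
by apply: eq_bigr => A _.
Qed.

Lemma wedge_interior_r {R : realType} {n} (X : 'I_n -> R) (a b : extform R n) S :
  wedge a (interior X b) S = \sum_i X i * wedge a (ib i b) S.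
Proof.
rewrite wedgeE.
rewrite (eq_bigr (fun A => \sum_i X i * ((-1) ^+ ninv A (S :\: A) * a A * ib i b (S :\: A)))); last first.
  by move=> A _; rewrite interiorE mulr_sumr; apply: eq_bigr => i _; ring.
rewrite exchange_big; apply: eq_bigr => i _; rewrite wedgeE mulr_sumr.
by apply: eq_bigr => A _.
Qed.

Lemma leibniz {R : realType} {n} p (X : 'I_n -> R) (a b : extform R n) S :
  is_pform p a ->
  interior X (wedge a b) S = wedge (interior X a) b S + (-1) ^+ p * wedge a (interior X b) S.
Proof.
move=> ha; rewrite interiorE wedge_interior_l wedge_interior_r mulr_sumr -big_split /=.
by apply: eq_bigr => i _; rewrite (@leibniz_ib _ _ p i a b S ha); ring.
Qed.

Lemma wedge_oppl {R : realType} {n} (a b : extform R n) :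
  wedge (- a) b = - wedge a b.
Proof.
apply/ffunP => S; rewrite oppE !wedgeE -sumrN; apply: eq_bigr => A _.
by rewrite oppE; ring.
Qed.

Lemma wedge0l {R : realType} {n} (b : extform R n) : wedge 0 b = 0.
Proof. by apply: zeroP => S; rewrite wedgeE big1 // => A _; rewrite zeroE; ring. Qed.

Lemma wedge0r {R : realType} {n} (a : extform R n) : wedge a 0 = 0.
Proof. by apply: zeroP => S; rewrite wedgeE big1 // => A _; rewrite zeroE; ring. Qed.

Lemma interior0 {R : realType} {n} (X : 'I_n -> R) : interior X (0 : extform R n) = 0.
Proof. by apply: zeroP => S; rewrite interiorE big1 // => i _; rewrite ibE zeroE; case: ifP => _; ring. Qed.

Lemma sum_compl {R : realType} {n} (S : {set 'I_n}) (f : {set 'I_n} -> R) :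
  \sum_(A : {set 'I_n} | A \subset S) f A = \sum_(A : {set 'I_n} | A \subset S) f (S :\: A).
Proof.
rewrite (reindex_onto (fun A => S :\: A) (fun A => S :\: A)); last first.
  by move=> A AS; rewrite setDDr setDv set0U; apply/setIidPr.
apply: eq_bigl => A; rewrite subsetDl /= setDDr setDv set0U.
by apply/eqP/idP => [<-|/setIidPr //]; apply: subsetIl.
Qed.

Lemma wedge_comm {R : realType} {n} p q (a b : extform R n) S :
  is_pform p a -> is_pform q b ->
  wedge a b S = (-1) ^+ (p * q) * wedge b a S.
Proof.
move=> ha hb; rewrite !wedgeE mulr_sumr [RHS]sum_compl; apply: eq_bigr => A AS.
have hA : S :\: (S :\: A) = A by rewrite setDDr setDv set0U; apply/setIidPr.
rewrite hA.
have [->|nza] := eqVneq (a A) 0; first by rewrite !(mulr0, mul0r).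
have [->|nzb] := eqVneq (b (S :\: A)) 0; first by rewrite !(mulr0, mul0r).
have hp : #|A| = p by apply/eqP; apply: contraR nza => hc; apply/eqP/ha.
have hq : #|S :\: A| = q by apply/eqP; apply: contraR nzb => hc; apply/eqP/hb.
have dA : [disjoint A & S :\: A].
  by rewrite -setI_eq0; apply/eqP/setP => x; rewrite !inE; case: (x \in A); rewrite ?andbF.
rewrite -hp -hq -(@ninv_sym _ A (S :\: A) dA).
move: (ninv A (S :\: A)) (ninv (S :\: A) A) => x1 x2.
rewrite !exprD !sgE /=; case: (odd x1); case: (odd x2); rewrite /=; ring.
Qed.

Lemma part1 {R : realType} {n} (F : extform R n) :
  is_pform 4 F ->
  (forall X : 'I_n -> R, wedge (interior X F) F = 0) ->
  (forall X Y : 'I_n -> R, wedge (interior X F) (interior Y F) = 0) ->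
  (forall X Y Z : 'I_n -> R, wedge (interior Z (interior Y (interior X F))) F = 0).
Proof.
move=> h4 H1 H2.
have h3 X : is_pform 3 (interior X F) := (@interior_pform R n 4 X F h4).
have h2 X Y : is_pform 2 (interior Y (interior X F)) := (@interior_pform R n 3 Y _ (h3 X)).
have Ka X Y S : wedge (interior Y (interior X F)) F S = 0.
  have := @leibniz R n 3 Y (interior X F) F S (h3 X).
  by rewrite H1 interior0 H2 !zeroE mulr0 addr0 => <-.
pose C X Y Z S := wedge (interior Y (interior X F)) (interior Z F) S.
have Csym X Y Z S : C X Z Y S = C Y Z X S.
  have := @leibniz R n 3 Z (interior X F) (interior Y F) S (h3 X).
  rewrite H2 interior0 zeroE (@wedge_comm R n 3 2 _ _ S (h3 X) (h2 Y Z)).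
  rewrite /C => /eqP; rewrite eq_sym addr_eq0 => /eqP ->.
  rewrite !exprS expr0; ring.
have Canti X Y Z S : C X Y Z S = - C Y X Z S.
  by rewrite /C interior_anti wedge_oppl oppE.
have C0 X Y Z S : C X Y Z S = 0.
  have e : C X Y Z S = - C X Y Z S.
    rewrite {1}Canti Csym Canti Csym Canti Csym opprK //.
  lra.
move=> X Y Z; apply: zeroP => S.
have := @leibniz R n 2 Z (interior Y (interior X F)) F S (h2 X Y).
have := Ka X Y; rewrite (_ : wedge _ F = 0); last by apply: zeroP.
rewrite interior0 zeroE; move: (C0 X Y Z S); rewrite /C => -> _.
by rewrite mulr0 addr0 => <-.
Qed.

Lemma cnt0 {n} (i : 'I_n) : cnt set0 i = 0%N.
Proof. by rewrite cnt_sum big_set0. Qed.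

Lemma wedge_0form {R : realType} {n} (c w : extform R n) S :
  is_pform 0 c -> wedge c w S = c set0 * w S.
Proof.
move=> hc; rewrite wedgeE (bigD1 set0) ?sub0set //= big1 ?addr0.
  by rewrite setD0 ninv_sum big_set0 expr0 mul1r.
move=> A /andP [_ A0]; rewrite hc ?mulr0 ?mul0r //.
by rewrite cards_eq0.
Qed.

Lemma div_main {R : realType} {n} (phi w : extform R n) i S :
  is_pform 1 phi ->
  ib i (wedge phi w) S = phi [set i] * w S - wedge phi (ib i w) S.
Proof.
move=> h1; rewrite (@leibniz_ib R n 1 i phi w S h1) (@wedge_0form R n _ _ S).
  by rewrite ibE in_set0 cnt0 setU0 expr0 mul1r expr1 mulN1r.
exact: (@ib_pform R n 1 i phi h1).
Qed.

Lemma divL {R : realType} {n} (phi w : extform R n) i :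
  is_pform 1 phi -> wedge phi w = 0 -> phi [set i] != 0 ->
  forall S, w S = (phi [set i])^-1 * wedge phi (ib i w) S.
Proof.
move=> h1 h0 nz S; have := @div_main R n phi w i S h1.
rewrite h0 ibE !zeroE; case: ifP => _; rewrite ?mulr0 => /eqP; rewrite eq_sym subr_eq0 => /eqP <-; by rewrite mulKf.
Qed.

Lemma divZ {R : realType} {n} (phi w : extform R n) i :
  is_pform 1 phi -> wedge phi w = 0 -> phi [set i] = 0 ->
  wedge phi (ib i w) = 0.
Proof.
move=> h1 h0 z; apply: zeroP => S; have := @div_main R n phi w i S h1.
rewrite h0 z ibE !zeroE mul0r sub0r; case: ifP => _; rewrite ?mulr0;
  by move/eqP; rewrite eq_sym oppr_eq0 => /eqP.
Qed.

Definition sc {R : realType} {n} (k : R) (w : extform R n) : extform R n :=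
  [ffun S : {set 'I_n} => k * w S].

Lemma wedge_scl {R : realType} {n} k (a b : extform R n) :
  wedge (sc k a) b = sc k (wedge a b).
Proof.
apply/ffunP => S; rewrite wedgeE [RHS]ffunE wedgeE mulr_sumr; apply: eq_bigr => A _.
by rewrite ffunE; ring.
Qed.

Lemma sc_pform {R : realType} {n} p k (a : extform R n) : is_pform p a -> is_pform p (sc k a).
Proof. by move=> h S hS; rewrite ffunE h ?mulr0. Qed.

Lemma oneform_of {R : realType} {n} (phi : extform R n) :
  is_pform 1 phi -> phi = oneform (fun i => phi [set i]).
Proof.
move=> h1; apply/ffunP => S; rewrite ffunE.
case: (boolP (#|S| == 1%N)) => [/cards1P [x ->]|nS].
  rewrite (big_pred1 x) // => i; apply/eqP/eqP => [/set1_inj //|->] //.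
rewrite h1 // big1 // => i /eqP hS; by move: nS; rewrite hS cards1 eqxx.
Qed.

Lemma sc_sc {R : realType} {n} a b (w : extform R n) : sc a (sc b w) = sc (a * b) w.
Proof. by apply/ffunP => S; rewrite !ffunE mulrA. Qed.

Theorem mainTheorem6 (R : realType) (n : nat) (F : extform R n) :
  is_pform 4 F ->
  (forall X : 'I_n -> R, wedge (interior X F) F = 0) ->
  (forall X Y : 'I_n -> R, wedge (interior X F) (interior Y F) = 0) ->
  (forall X Y Z : 'I_n -> R, wedge (interior Z (interior Y (interior X F))) F = 0) /\
  exists t1 t2 t3 t4 : 'I_n -> R,
    F = wedge (wedge (wedge (oneform t1) (oneform t2)) (oneform t3))
              (oneform t4).
Proof.
move=> h4 H1 H2.
have P1 := @part1 R n F h4 H1 H2.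
split => //.
case: (boolP [exists S, F S != 0]) => [/existsP [S0 nz0] | /existsPn allz]; last first.
  exists (fun _ => 0), (fun _ => 0), (fun _ => 0), (fun _ => 0).
  have o0 : oneform (fun _ : 'I_n => (0:R)) = 0.
    by apply: zeroP => S; rewrite ffunE big1.
  rewrite o0 wedge0r; apply: zeroP => S; apply/eqP; move: (allz S); by rewrite negbK.
have c4 : #|S0| = 4%N by apply/eqP; apply: contraR nz0 => h; apply/eqP/h4.
have hs : size (enum S0) = 4%N by rewrite -cardE.
have hu : uniq (enum S0) := enum_uniq _.
have hm : forall x, (x \in S0) = (x \in enum S0) by move=> x; rewrite mem_enum.
move: hs hu hm; case: (enum S0) => [|a [|b [|c [|d [|? ?]]]]] //= _.
move=> hu hm; move: hu; rewrite !inE !negb_or.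
move=> /and4P [/and3P [ab ac ad] /andP [bc bd] cd _].
have ba : b != a by rewrite eq_sym.
have ca : c != a by rewrite eq_sym.
have da : d != a by rewrite eq_sym.
have cb : c != b by rewrite eq_sym.
have db : d != b by rewrite eq_sym.
have dc : d != c by rewrite eq_sym.
pose E := (negbTE ab, negbTE ac, negbTE ad, negbTE bc, negbTE bd, negbTE cd,
           negbTE ba, negbTE ca, negbTE da, negbTE cb, negbTE db, negbTE dc).
have hS0 : forall T : {set 'I_n}, (forall x, (x \in T) = [|| x == a, x == b, x == c | x == d]) -> F T != 0.
  move=> T hT; have -> : T = S0 by apply/setP => x; rewrite hT hm !inE.
  exact: nz0.
pose pa := ib d (ib c (ib b F)).
pose pb := ib d (ib c (ib a F)).
pose pc := ib d (ib b (ib a F)).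
pose pd := ib c (ib b (ib a F)).
have h1 : forall x y z, is_pform 1 (ib z (ib y (ib x F))).
  move=> x y z; exact: (@ib_pform R n 2 z _ (@ib_pform R n 3 y _ (@ib_pform R n 4 x F h4))).
have wz : forall x y z, wedge (ib z (ib y (ib x F))) F = 0.
  by move=> x y z; have := P1 (fun j => (j == x)%:R) (fun j => (j == y)%:R) (fun j => (j == z)%:R);
     rewrite !interior_delta.
have nza : pa [set a] != 0.
  rewrite /pa !ibE !inE !E /= !mulf_eq0 !signr_eq0 /=; apply: hS0 => x; rewrite !inE.
  by case: (x == a); case: (x == b); case: (x == c); case: (x == d).
have nzb : pb [set b] != 0.
  rewrite /pb !ibE !inE !E /= !mulf_eq0 !signr_eq0 /=; apply: hS0 => x; rewrite !inE.
  by case: (x == a); case: (x == b); case: (x == c); case: (x == d).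
have nzc : pc [set c] != 0.
  rewrite /pc !ibE !inE !E /= !mulf_eq0 !signr_eq0 /=; apply: hS0 => x; rewrite !inE.
  by case: (x == a); case: (x == b); case: (x == c); case: (x == d).
have zba : pb [set a] = 0.
  by rewrite /pb !ibE !inE !E eqxx /= ?orbT /= !mulr0.
have zca : pc [set a] = 0.
  by rewrite /pc !ibE !inE !E eqxx /= ?orbT /= !mulr0.
have zcb : pc [set b] = 0.
  by rewrite /pc !ibE !inE !E eqxx /= ?orbT /= !mulr0.
have h1a : is_pform 1 pa := h1 _ _ _.
have h1b : is_pform 1 pb := h1 _ _ _.
have h1c : is_pform 1 pc := h1 _ _ _.
have h1d : is_pform 1 pd := h1 _ _ _.
have q1f : is_pform 3 (ib a F) := @ib_pform R n 4 a F h4.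
have q2f : is_pform 2 (ib b (ib a F)) := @ib_pform R n 3 b _ q1f.
have wb1 : wedge pb (ib a F) = 0 := @divZ R n pb F a h1b (wz _ _ _) zba.
have wc1 : wedge pc (ib a F) = 0 := @divZ R n pc F a h1c (wz _ _ _) zca.
have wc2 : wedge pc (ib b (ib a F)) = 0 := @divZ R n pc (ib a F) b h1c wc1 zcb.
pose kc := (pc [set c])^-1 * (-1) ^+ (1 * 1).
pose kb := (pb [set b])^-1 * (-1) ^+ (1 * 2).
pose ka := (pa [set a])^-1 * (-1) ^+ (1 * 3).
have E3 : ib b (ib a F) = sc kc (wedge pd pc).
  apply/ffunP => S; rewrite (@divL R n pc (ib b (ib a F)) c h1c wc2 nzc S) [RHS]ffunE.
  by rewrite (@wedge_comm R n 1 1 pc pd S h1c h1d) /kc mulrA.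
have E2 : ib a F = sc kb (wedge (ib b (ib a F)) pb).
  apply/ffunP => S; rewrite (@divL R n pb (ib a F) b h1b wb1 nzb S) [RHS]ffunE.
  by rewrite (@wedge_comm R n 1 2 pb _ S h1b q2f) /kb mulrA.
have E1 : F = sc ka (wedge (ib a F) pa).
  apply/ffunP => S; rewrite {1}(@divL R n pa F a h1a (wz _ _ _) nza S) [RHS]ffunE.
  by rewrite (@wedge_comm R n 1 3 pa _ S h1a q1f) /ka mulrA.
exists (fun i => sc (ka * (kb * kc)) pd [set i]), (fun i => pc [set i]),
       (fun i => pb [set i]), (fun i => pa [set i]).
rewrite -!oneform_of //; last exact: sc_pform.
rewrite !wedge_scl E1 E2 E3 !wedge_scl !sc_sc.
by rewrite mulrA.
Qed.
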